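(* Let $G$ be an $(N,k)$ Adinkra obtained from an $N$-cube Adinkra by quotienting by a doubly even $(N,k)$ code $C$, so that its vertices are labeled by cosets $x+C\in\mathbb{Z}_2^N/C$. Let $D$ be a standard form generating set of $C$. For two vertices $x+C$ and $y+C$, there exists an automorphism of $G$ disregarding vertex coloring (i.e. ignoring both heights and the boson/fermion bipartition) mapping $x+C$ to $y+C$ if and only if $\langle x,c\rangle\equiv\langle y,c\rangle\pmod 2$ for every $c\in D$.
   Context: An Adinkra of dimension $N$ is a finite connected simple graph $G=(V,E)$ with: a bipartition of $V$ into bosons and fermions (every edge joins a boson and a fermion); a height function $\mathrm{hgt}:V\to\mathbb{Z}$ with adjacent vertices at heights differing by $1$; a coloring of $E$ by colors $\{1,\dots,N\}$ such that each vertex is incident to exactly one edge of each color; an edge parity $\pi:E\to\mathbb{Z}_2$ (parity $1$ = dashed); such that every path with edge colors $(i,j)$, $i\ne j$, lies in a unique 4-cycle with colors $(i,j,i,j)$, each having an odd number of dashed edges. If $|V|=2^{N-k}$, $G$ is an $(N,k)$ Adinkra. Switching a vertex reverses the parity of its incident edges. A doubly even $(N,k)$ code $C$ is a $k$-dimensional subspace of $\mathbb{Z}_2^N$ all of whose elements have weight $\equiv0\pmod4$; $\langle u,v\rangle=\sum_i u_iv_i \bmod 2$, and $C$ is self-orthogonal. A standard form generating set of $C$ is a basis $g_1,\dots,g_k$ of $C$ such that for some $k$ coordinates the restrictions of the $g_i$ to these coordinates form the $k\times k$ identity matrix. Quotient construction: label the vertices of an $N$-cube Adinkra by $\mathbb{Z}_2^N$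 so that color-$i$ edges join $v$ and $v+e_i$, and (when vertices differing by elements of $C$ have matching edge parities) identify vertices whose labels differ by elements of $C$; the result has vertices $x+C$, color-$i$ edges joining $x+C$ and $x+e_i+C$, and $\langle x,c\rangle$ for $c\in C$ depends only on the coset. An automorphism disregarding vertex coloring is a permutation of $V$ preserving adjacency and edge colors which becomes parity-preserving after switching some set of vertices. *)

(* Defs.v *)
From HB Require Import structures.
From mathcomp Require Import all_boot all_order all_algebra all_fingroup.
Set Implicit Arguments. Unset Strict Implicit. Unset Printing Implicit Defensive.
Import GRing.Theory.
Local Open Scope ring_scope.

Notation vec N := 'rV['F_2]_N.

Definition unitv (N : nat) (i : 'I_N) : vec N := delta_mx 0 i.

Definition wt (N : nat) (x : vec N) : nat := #|[set i | x 0 i != 0]|.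

Definition ip (N : nat) (u v : vec N) : 'F_2 := \sum_i u 0 i * v 0 i.

Definition doubly_even_code (N k : nat) (C : {vspace vec N}) : Prop :=
  [/\ \dim C = k,
      (forall c, c \in C -> wt c %% 4 = 0)%N
    & (forall u v, u \in C -> v \in C -> ip u v = 0)].

Definition standard_form (N k : nat) (C : {vspace vec N}) (D : k.-tuple (vec N)) : Prop :=
  basis_of C D /\
  exists f : 'I_k -> 'I_N, injective f /\
    forall i j : 'I_k, (tnth D i) 0 (f j) = (i == j)%:R.

(* Edge parities of an N-cube Adinkra: p x i is the parity (true = dashed)
   of the colour-i edge joining x and x + e_i. *)
Definition cube_adinkra_parity (N : nat) (p : vec N -> 'I_N -> bool) : Prop :=
  (forall x i, p (x + unitv i) i = p x i) /\
  (forall x (i j : 'I_N), i != j ->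
     p x i (+) p (x + unitv i) j (+) p (x + unitv j) i (+) p x j = true).

Definition coset_labeling (N : nat) (C : {vspace vec N}) (V : finType) (q : vec N -> V) : Prop :=
  (forall v : V, exists x, q x = v) /\
  (forall x y, q x = q y <-> x - y \in C).

Definition qedge (N : nat) (V : finType) (q : vec N -> V) (i : 'I_N) (u v : V) : Prop :=
  exists x, u = q x /\ v = q (x + unitv i).

(* automorphism disregarding vertex colouring: permutation of V preserving
   adjacency with edge colours, which becomes parity preserving after
   switching some set s of vertices *)
Definition auto_disregarding_vertex_coloring (N : nat) (V : finType) (q : vec N -> V)
    (pG : V -> 'I_N -> bool) (sigma : {perm V}) : Prop :=
  (forall i u v, qedge q i u v <-> qedge q i (sigma u) (sigma v)) /\
  exists s : V -> bool, forall i u v, qedge q i u v ->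
     pG (sigma u) i = pG u i (+) s u (+) s v.

(* Main.v *)
Require Import Defs.
From HB Require Import structures.
From mathcomp Require Import all_boot all_order all_algebra all_fingroup.
Local Open Scope ring_scope.
Import GRing.Theory.
Set Implicit Arguments. Unset Strict Implicit.

Lemma F2cases (a : 'F_2) : a = 0 \/ a = 1.
Proof. case: a => [[|[|m]] H]; [left|right|]; try by apply/val_inj. by []. Qed.
Ltac f2c a := case: (F2cases a) => ->.
Ltac f2fin := try (move/eqP => ?); apply/eqP => //.

Lemma F2dbl (a : 'F_2) : a + a = 0.
Proof. by f2c a; f2fin. Qed.
Lemma F2opp (a : 'F_2) : - a = a.
Proof. by f2c a; f2fin. Qed.

Definition pre N (n : nat) (x : vec N) : vec N := \row_k (if (k < n)%N then x 0 k else 0).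
Definition Pf N (p : vec N -> 'I_N -> bool) (x : vec N) (i : 'I_N) : 'F_2 := (p x i)%:R.
Definition Wn N p (n : nat) (x : vec N) : 'F_2 :=
  \sum_(j < N | (j < n)%N) x 0 j * Pf p (pre j x) j.
Definition Aa N (i : 'I_N) (x : vec N) : 'F_2 := \sum_(j < N | (i < j)%N) x 0 j.
Definition Ll N (c x : vec N) : 'F_2 := \sum_(i < N) x 0 i * Aa i c.

Lemma unitvE N (i k : 'I_N) : unitv i 0 k = (k == i)%:R.
Proof. by rewrite /unitv mxE eqxx. Qed.

Lemma preE N n (x : vec N) k : pre n x 0 k = if (k < n)%N then x 0 k else 0.
Proof. by rewrite mxE. Qed.

Lemma pre_add N n (x y : vec N) : pre n (x + y) = pre n x + pre n y.
Proof. apply/rowP => k; rewrite !mxE; by case: ifP; rewrite ?addr0. Qed.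

Lemma pre_e N n (i : 'I_N) : pre n (unitv i) = if (i < n)%N then unitv i else 0.
Proof.
apply/rowP => k; rewrite !mxE eqxx /=; case: (eqVneq k i) => [->|ne].
  by case: ifP => _; rewrite ?mxE ?eqxx.
by case: ifP => _; case: ifP => _; rewrite ?mxE ?eqxx ?(negbTE ne).
Qed.

Lemma preS N (x : vec N) (j : 'I_N) : pre j.+1 x = pre j x + x 0 j *: unitv j.
Proof.
apply/rowP => k; rewrite !mxE eqxx /= ltnS leq_eqVlt -val_eqE /=.
case: (ltngtP k j) => h /=; rewrite ?mulr0 ?addr0 ?mulr1 ?add0r //.
by rewrite (val_inj h).
Qed.

Lemma preN N (x : vec N) : pre N x = x.
Proof. by apply/rowP => k; rewrite mxE ltn_ord. Qed.

Lemma big_lastS N (P : pred 'I_N) (F : 'I_N -> 'F_2) (j : 'I_N) :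
  \sum_(k < N | P k && (k < j.+1)%N) F k =
  \sum_(k < N | P k && (k < j)%N) F k + (if P j then F j else 0).
Proof.
rewrite (bigID (fun k : 'I_N => (k < j)%N)) /=; congr (_ + _).
  apply: eq_bigl => k; case: (P k) => //=; case: (ltnP k j) => h //=.
  by rewrite ltnS ltnW.
  by rewrite andbF.
case: ifP => Pj.
  apply: big_pred1 => k /=; rewrite -val_eqE /= ltnS.
  case: (ltngtP k j) => h; rewrite ?andbF ?andbT //=; last by rewrite (val_inj h) Pj.
apply: big_pred0 => k /=; rewrite ltnS.
case: (ltngtP k j) => h; rewrite ?andbF ?andbT //=; last by rewrite (val_inj h) Pj.
Qed.

Lemma Pf_sq N (p : vec N -> 'I_N -> bool) : cube_adinkra_parity p ->
  forall a (i j : 'I_N), i != j ->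
  Pf p a i + Pf p (a + unitv i) j + Pf p (a + unitv j) i + Pf p a j = 1.
Proof.
case=> _ H a i j ne; have := H a i j ne; rewrite /Pf.
by case: (p a i); case: (p (a + unitv i) j); case: (p (a + unitv j) i); case: (p a j);
  move=> //= _; apply/eqP.
Qed.

Lemma Pf_edge N (p : vec N -> 'I_N -> bool) : cube_adinkra_parity p ->
  forall a i, Pf p (a + unitv i) i = Pf p a i.
Proof. by case=> H _ a i; rewrite /Pf H. Qed.

Lemma Wn_diff N (p : vec N -> 'I_N -> bool) (Hp : cube_adinkra_parity p)
  (x : vec N) (i : 'I_N) n : (n <= N)%N ->
  Wn p n (x + unitv i) + Wn p n x =
  if (i < n)%N then Pf p (pre n x) i + \sum_(j < N | (i < j)%N && (j < n)%N) x 0 j else 0.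
Proof.
elim: n => [|n IH] hn.
  have P0 : (fun j : 'I_N => (j < 0)%N) =1 xpred0 by move=> j; rewrite ltn0.
  rewrite /Wn !big_pred0 //; last by move=> j /=; rewrite ltn0 andbF.
  by rewrite ltn0; apply/eqP.
have IH' := IH (ltnW hn).
pose j0 := Ordinal hn.
have E : forall y, Wn p n.+1 y = Wn p n y + y 0 j0 * Pf p (pre n y) j0.
  by move=> y; rewrite /Wn (big_lastS xpredT _ j0).
rewrite !E addrACA IH' mxE unitvE pre_add pre_e.
have -> : \sum_(j < N | (i < j)%N && (j < n.+1)%N) x 0 j =
   \sum_(j < N | (i < j)%N && (j < n)%N) x 0 j + (if (i < j0)%N then x 0 j0 else 0).
  by rewrite (big_lastS (fun j : 'I_N => (i < j)%N) _ j0).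
have -> : pre n.+1 x = pre n x + x 0 j0 *: unitv j0 by rewrite (preS x j0).
rewrite /=.
case: (ltngtP n i) => h.
- have ne : (j0 == i) = false by rewrite -val_eqE /= ltn_eqF.
  rewrite ne !addr0 add0r ltnNge h /=.
  by rewrite F2dbl.
- have ne : (j0 == i) = false by rewrite -val_eqE /= gtn_eqF.
  rewrite ne addr0 ltnS (ltnW h).
  have Hs := Pf_sq Hp (pre n x) (negbT ne).
  move: Hs; f2c (x 0 j0); rewrite ?scale0r ?scale1r ?addr0.
    by rewrite !mul0r !addr0.
  rewrite !mul1r.
  move: (Pf p (pre n x) i) (Pf p (pre n x + unitv i) j0) (Pf p (pre n x + unitv j0) i)
        (Pf p (pre n x) j0) (\sum_(j < N | (i < j)%N && (j < n)%N) x 0 j) => a b c d S.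
  by f2c a; f2c b; f2c c; f2c d; f2c S; f2fin.
- have e : j0 = i by apply/val_inj.
  rewrite e eqxx h ltnSn add0r.
  rewrite big_pred0; last first.
    move=> j /=; apply/negbTE/andP => [[h1 h2]]; move: (ltn_trans h1 h2); by rewrite ltnn.
  rewrite !addr0.
  f2c (x 0 i); rewrite ?scale0r ?scale1r ?addr0 ?Pf_edge //.
  - by rewrite add0r mul1r mul0r addr0.
  - by rewrite mul1r (F2dbl 1) mul0r add0r.
Qed.

Definition W N (p : vec N -> 'I_N -> bool) (x : vec N) := Wn p N x.

Lemma W_diff N (p : vec N -> 'I_N -> bool) (Hp : cube_adinkra_parity p) x i :
  W p (x + unitv i) + W p x = Pf p x i + Aa i x.
Proof.
rewrite /W Wn_diff // ltn_ord preN; congr (_ + _).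
by apply: eq_bigl => j; rewrite ltn_ord andbT.
Qed.

Lemma Aa_add N i (x y : vec N) : Aa i (x + y) = Aa i x + Aa i y.
Proof. by rewrite /Aa -big_split; apply: eq_bigr => j _; rewrite mxE. Qed.

Lemma Ll_add N (c x y : vec N) : Ll c (x + y) = Ll c x + Ll c y.
Proof. by rewrite /Ll -big_split; apply: eq_bigr => j _; rewrite mxE mulrDl. Qed.

Lemma Ll_e N (c : vec N) i : Ll c (unitv i) = Aa i c.
Proof.
rewrite /Ll (bigD1 i) //= unitvE eqxx mul1r big1 ?addr0 // => j ne.
by rewrite unitvE (negbTE ne) mul0r.
Qed.

Lemma conn N (Q : vec N -> Prop) : (forall z i, Q z -> Q (z + unitv i)) ->
  forall x y, Q x -> Q y.
Proof.
move=> H x y Qx.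
have: forall s : seq 'I_N, Q (x + \sum_(i <- s) (y - x) 0 i *: unitv i).
  elim => [|a s IH]; first by rewrite big_nil addr0.
  rewrite big_cons addrCA addrC.
  case: (F2cases ((y - x) 0 a)) => ->; rewrite ?scale0r ?scale1r ?addr0 //.
  by apply: H.
move/(_ (enum 'I_N)); rewrite big_enum /= /unitv -row_sum_delta.
by rewrite addrC subrK.
Qed.

Lemma const N (F : vec N -> 'F_2) : (forall z i, F (z + unitv i) = F z) ->
  forall x y, F y = F x.
Proof.
move=> H x y; apply: (@conn N (fun z => F z = F x)) => //.
by move=> z i <-.
Qed.

Lemma sum_split N (c : vec N) (i : 'I_N) :
  \sum_j c 0 j = c 0 i + Aa i c + \sum_(j < N | (j < i)%N) c 0 j.
Proof.
rewrite (bigD1 i) //= -addrA; congr (_ + _).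
rewrite (bigID (fun j : 'I_N => (i < j)%N)) /=; congr (_ + _);
  apply: eq_bigl => j; rewrite -val_eqE /=; case: (ltngtP i j) => h;
  by rewrite ?(gtn_eqF h) ?(ltn_eqF h) ?h ?eqxx.
Qed.

Lemma cross N (c t : vec N) :
  Ll c t + Ll t c = (\sum_j t 0 j) * (\sum_j c 0 j) + ip t c.
Proof.
have E : Ll t c = \sum_i t 0 i * \sum_(j < N | (j < i)%N) c 0 j.
  rewrite /Ll /Aa.
  transitivity (\sum_(i < N) \sum_(j < N) (if (i < j)%N then c 0 i * t 0 j else 0)).
    by apply: eq_bigr => i _; rewrite mulr_sumr big_mkcond.
  rewrite exchange_big; apply: eq_bigr => j _.
  by rewrite [RHS]mulr_sumr [RHS]big_mkcond; apply: eq_bigr => i _; case: ifP => _ //; rewrite mulrC.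
rewrite E /Ll -big_split mulr_suml /ip -big_split /=; apply: eq_bigr => i _.
rewrite (sum_split c i) -mulrDr -mulrDr; congr (_ * _).
move: (c 0 i) (Aa i c) (\sum_(j < N | (j < i)%N) c 0 j) => a b d.
by f2c a; f2c b; f2c d; f2fin.
Qed.

Lemma sum_wt N (c : vec N) : (wt c %% 4 = 0)%N -> \sum_j c 0 j = 0.
Proof.
move=> H.
have -> : \sum_j c 0 j = \sum_(j in [set j | c 0 j != 0]) 1.
  rewrite [RHS]big_mkcond; apply: eq_bigr => j _; rewrite inE.
  by case: (F2cases (c 0 j)) => ->.
rewrite sumr_const -/(wt c).
rewrite (divn_eq (wt c) 4) H addn0 natrM.
have -> : (4%:R : 'F_2) = 0 by apply/eqP.
by rewrite mulr0.
Qed.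

Lemma F2_move (a b d : 'F_2) : a + b = d -> a = d + b.
Proof. by move=> <-; rewrite -addrA F2dbl addr0. Qed.
Lemma F2_eq (a b : 'F_2) : a + b = 0 -> a = b.
Proof. by move=> H; rewrite -[a]addr0 -(F2dbl b) addrA H add0r. Qed.

Lemma shift N (C : {vspace vec N}) (p : vec N -> 'I_N -> bool)
  (Hp : cube_adinkra_parity p) (Pinv : forall x c i, c \in C -> p (x + c) i = p x i)
  c t z : c \in C ->
  W p (z + t + c) + W p (z + t) + W p (z + c) + W p z = Ll c t.
Proof.
move=> cC.
pose G z := W p (z + c) + W p z + Ll c z.
have HG : forall z i, G (z + unitv i) = G z.
  move=> y i; apply: F2_eq; rewrite /G.
  have h1 := F2_move (W_diff Hp (y + c) i).
  have h2 := F2_move (W_diff Hp y i).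
  rewrite [y + unitv i + c]addrAC h1 h2 Ll_add Ll_e Aa_add.
  have -> : Pf p (y + c) i = Pf p y i by rewrite /Pf Pinv.
  move: (Pf p y i) (Aa i y) (Aa i c) (W p (y + c)) (W p y) (Ll c y) => a b d e f g.
  by f2c a; f2c b; f2c d; f2c e; f2c f; f2c g; f2fin.
have := const HG z (z + t); rewrite /G Ll_add.
move: (W p (z + t + c)) (W p (z + t)) (W p (z + c)) (W p z) (Ll c z) (Ll c t) => a b d e f g.
by f2c a; f2c b; f2c d; f2c e; f2c f; f2c g; f2fin.
Qed.

Lemma key_nec N (C : {vspace vec N}) (p : vec N -> 'I_N -> bool)
  (Hp : cube_adinkra_parity p) (Pinv : forall x c i, c \in C -> p (x + c) i = p x i)
  (t : vec N) (S : vec N -> 'F_2) :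
  (forall z c, c \in C -> S (z + c) = S z) ->
  (forall z i, Pf p (z + t) i = Pf p z i + S z + S (z + unitv i)) ->
  forall c, c \in C -> \sum_j c 0 j = 0 -> ip t c = 0.
Proof.
move=> Sinv He c cC sc.
pose F z := W p (z + t) + W p z + Ll t z + S z.
have HF : forall z i, F (z + unitv i) = F z.
  move=> y i; apply: F2_eq; rewrite /F.
  have h1 := F2_move (W_diff Hp (y + t) i).
  have h2 := F2_move (W_diff Hp y i).
  rewrite [y + unitv i + t]addrAC h1 h2 Ll_add Ll_e Aa_add He.
  move: (Pf p y i) (Aa i y) (Aa i t) (W p (y + t)) (W p y) (Ll t y) (S y) (S (y + unitv i))
    => a b d e f g h k.
  by f2c a; f2c b; f2c d; f2c e; f2c f; f2c g; f2c h; f2c k; f2fin.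
have h1 := const HF 0 c; rewrite /F !add0r in h1.
have Sc : S c = S 0 by rewrite -{1}(add0r c) Sinv.
have h2 := @shift N C p Hp Pinv c t 0 cC; rewrite !add0r in h2.
have L0 : Ll t 0 = 0 by rewrite /Ll big1 // => j _; rewrite mxE mul0r.
have h3 := cross c t; rewrite sc mulr0 add0r in h3.
rewrite -h3; move: h1 h2; rewrite Sc L0 [c + t]addrC.
move: (W p (t + c)) (W p t) (W p c) (W p 0) (Ll t c) (Ll c t) (S 0) => a b d e f g h.
by f2c a; f2c b; f2c d; f2c e; f2c f; f2c g; f2c h; move/eqP => ?; f2fin.
Qed.

Lemma key_suf N (C : {vspace vec N}) (p : vec N -> 'I_N -> bool)
  (Hp : cube_adinkra_parity p) (Pinv : forall x c i, c \in C -> p (x + c) i = p x i)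
  (t : vec N) :
  (forall c, c \in C -> \sum_j c 0 j = 0 /\ ip t c = 0) ->
  let S := fun z => W p (z + t) + W p z + Ll t z in
  (forall z c, c \in C -> S (z + c) = S z) /\
  (forall z i, Pf p (z + t) i = Pf p z i + S z + S (z + unitv i)).
Proof.
move=> Hc S; split.
  move=> z c cC; apply: F2_eq; rewrite /S.
  have h2 := @shift N C p Hp Pinv c t z cC.
  have [sc ic] := Hc c cC.
  have h3 := cross c t; rewrite sc mulr0 add0r ic in h3.
  rewrite [z + c + t]addrAC Ll_add; move: h2 h3.
  move: (W p (z + t + c)) (W p (z + t)) (W p (z + c)) (W p z) (Ll t z) (Ll t c) (Ll c t) => a b d e f g h.
  by f2c a; f2c b; f2c d; f2c e; f2c f; f2c g; f2c h; move/eqP => ?; f2fin.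
move=> y i; rewrite /S.
have h1 := F2_move (W_diff Hp (y + t) i).
have h2 := F2_move (W_diff Hp y i).
rewrite [y + unitv i + t]addrAC h1 h2 Ll_add Ll_e Aa_add.
move: (Pf p y i) (Pf p (y + t) i) (Aa i y) (Aa i t) (W p (y + t)) (W p y) (Ll t y) => a b d e f g h.
by f2c a; f2c b; f2c d; f2c e; f2c f; f2c g; f2c h; f2fin.
Qed.

Lemma xorF2 (a b : bool) : ((a (+) b)%:R : 'F_2) = a%:R + b%:R.
Proof. by case: a; case: b; apply/eqP. Qed.

Lemma boolF2 (b : bool) (a c : 'F_2) :
  ((b%:R + a + c == 1) = b (+) (a == 1) (+) (c == 1)).
Proof. by case: b; f2c a; f2c c. Qed.

Lemma ipB1 N (u v w : vec N) : ip (u - v) w = ip u w - ip v w.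
Proof. by rewrite /ip -sumrB; apply: eq_bigr => j _; rewrite !mxE mulrBl. Qed.

Lemma ip_mx N (t v : vec N) : ip t v = (v *m t^T) 0 0.
Proof. by rewrite /ip mxE; apply: eq_bigr => j _; rewrite mxE mulrC. Qed.

Lemma ip_span N k (C : {vspace vec N}) (D : k.-tuple (vec N)) (t : vec N) :
  basis_of C D -> (forall d, d \in D -> ip t d = 0) -> forall c, c \in C -> ip t c = 0.
Proof.
move=> B Hd c cC.
have cD : c \in <<D>>%VS by rewrite (span_basis B).
rewrite (coord_span cD) ip_mx mulmx_suml summxE big1 // => i _.
rewrite -scalemxAl mxE -ip_mx Hd ?mulr0 //.
by apply: mem_nth; rewrite size_tuple.
Qed.

Theorem mainTheorem5 (N k : nat) (C : {vspace vec N}) (D : k.-tuple (vec N))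
    (p : vec N -> 'I_N -> bool) (V : finType) (q : vec N -> V)
    (pG : V -> 'I_N -> bool) :
  doubly_even_code k C ->
  standard_form C D ->
  cube_adinkra_parity p ->
  (forall x c i, c \in C -> p (x + c) i = p x i) ->
  coset_labeling C q ->
  (forall x i, pG (q x) i = p x i) ->
  forall x y : vec N,
    (exists sigma : {perm V},
        auto_disregarding_vertex_coloring q pG sigma /\ sigma (q x) = q y) <->
    (forall c, c \in D -> ip x c = ip y c).
Proof.
move=> [_ Hwt _] [B _] Hp Pinv [qsurj qeq] HpG x y.
have sumC : forall c, c \in C -> \sum_j c 0 j = 0 by move=> c /Hwt; apply: sum_wt.
have DC : forall d, d \in D -> d \in C.
  by move=> d dD; rewrite -(span_basis B) memv_span.
have q_add : forall a b d, q a = q b -> q (a + d) = q (b + d).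
  move=> a b d /qeq H; apply/qeq; by rewrite opprD addrACA subrr addr0.
have qC : forall z c, c \in C -> q (z + c) = q z.
  by move=> z c cC; apply/qeq; rewrite addrC addKr.
pose rep v := odflt 0 [pick z | q z == v].
have q_rep : forall v, q (rep v) = v.
  move=> v; rewrite /rep; case: pickP => [z /eqP //|H].
  by have [z hz] := qsurj v; move: (H z); rewrite hz eqxx.
have rep_q : forall z, rep (q z) - z \in C by move=> z; apply/qeq; rewrite q_rep.
set t := y - x.
split.
- move=> [sigma [[Hedge [s Hs]] hsx]].
  have T : forall z, sigma (q z) = q (z + t).
    move=> z0; apply: (@conn N (fun z => sigma (q z) = q (z + t)) _ x z0).
      move=> z i Tz.
      have e : qedge q i (q z) (q (z + unitv i)) by exists z.
      have [w [h1 h2]] := (Hedge i _ _).1 e.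
      rewrite h2 addrAC; apply: q_add; by rewrite -h1 Tz.
    by rewrite hsx /t addrC subrK.
  pose S z := ((s (q z))%:R : 'F_2).
  have Sinv : forall z c, c \in C -> S (z + c) = S z by move=> z c cC; rewrite /S qC.
  have He : forall z i, Pf p (z + t) i = Pf p z i + S z + S (z + unitv i).
    move=> z i.
    have e : qedge q i (q z) (q (z + unitv i)) by exists z.
    by have := Hs i _ _ e; rewrite T !HpG /Pf => ->; rewrite !xorF2.
  have ipt := key_nec Hp Pinv Sinv He.
  move=> d dD; apply/eqP; rewrite eq_sym -subr_eq0 -ipB1; apply/eqP.
  by apply: ipt; [apply: DC | apply: sumC; apply: DC].
- move=> Hd.
  have ipD : forall d, d \in D -> ip t d = 0 by move=> d dD; rewrite ipB1 Hd ?subrr.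
  have ipC := ip_span B ipD.
  have [Sinv He] := key_suf Hp Pinv (t := t) (fun c cC => conj (sumC c cC) (ipC c cC)).
  pose S := fun z => W p (z + t) + W p z + Ll t z.
  have {}Sinv : forall z c, c \in C -> S (z + c) = S z := Sinv.
  have {}He : forall z i, Pf p (z + t) i = Pf p z i + S z + S (z + unitv i) := He.
  pose f v := q (rep v + t).
  have finj : injective f.
    move=> u v; rewrite /f => h.
    have := q_add _ _ (- t) h; rewrite !addrK !q_rep => //.
  pose sigma := perm finj.
  have fq : forall z, sigma (q z) = q (z + t).
    by move=> z; rewrite permE /f; apply: q_add; rewrite q_rep.
  exists sigma; split; last by rewrite fq /t addrC subrK.
  split.
    move=> i u v; split.
      by move=> [z [-> ->]]; exists (z + t); rewrite !fq addrAC.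
    move=> [w [h1 h2]].
    have hu : u = q (rep u) by rewrite q_rep.
    exists (rep u); split => //.
    apply: (@perm_inj _ sigma); rewrite h2 fq addrAC; apply: q_add.
    by rewrite -fq -hu h1.
  exists (fun v => S (rep v) == 1) => i u v [z [-> ->]].
  have Sr : forall z, S (rep (q z)) = S z.
    by move=> z'; rewrite -[rep (q z')](subrK z') addrC Sinv.
  rewrite fq !HpG !Sr -boolF2 -He /Pf.
  by case: (p (z + t) i); apply/eqP.
Qed.
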